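(* Let $\mathcal{L}$ be a Lie algebra over $\mathbf{k}$, $k\in\mathbf{k}$ nonzero, and let $((\mathcal{U},q),i)$ be the enveloping$^{6\text{-th}}$ algebra of $\mathcal{L}$. Then there exists a unique invariant anti-homomorphism $S$ of $(\mathcal{U},q)$ such that $S(q)=1-q$ and $S(i(x))=-\frac1k i(x)-k\,q\,i(x)+\frac1k i(x)q$ for all $x\in\mathcal{L}$.
   Context: Invariant algebra: for an associative algebra $A$ with identity and idempotent $q$, $(A,q)=\{x\in A: qxq=qx\}$; $\mathrm{Lie}(A,q)$ is $(A,q)$ with bracket $[x,y]_{6,k}=xy-yx-xyq+yxq+kxqy-kyqx$; invariant homomorphisms are unital multiplicative linear maps preserving the distinguished idempotents. The enveloping$^{6\text{-th}}$ algebra $((\mathcal{U},q),i)$: $(\mathcal{U},q)$ an invariant algebra, $i:\mathcal{L}\to\mathrm{Lie}(\mathcal{U},q)$ a Lie homomorphism, such that every Lie homomorphism $f:\mathcal{L}\to\mathrm{Lie}(A,q_A)$ into an invariant algebra factors uniquely as $f=f'\circ i$ with $f'$ an invariant homomorphism; here $(\mathcal{U},q)=\mathcal{U}$. For an invariant algebra $(A,q)$, the opposite invariant algebra is $(\mathring A,1-q)$ where $\mathring A=A$ with product $x\circ y=yx$. An invariant anti-homomorphism of $(A,q)$ is an invariant homomorphism $(A,q)\to(\mathring A,1-q)$, i.e. a linear map $S$ with $S(xy)=S(y)S(x)$, $S(1)=1$, $S(q)=1-q$. *)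

(* Defs.v *)
From HB Require Import structures.
From mathcomp Require Import all_boot all_order all_algebra.
Set Implicit Arguments. Unset Strict Implicit. Unset Printing Implicit Defensive.
Import GRing.Theory.
Local Open Scope ring_scope.

Definition lie_bracket (F : fieldType) (L : lmodType F) (br : L -> L -> L) : Prop :=
  [/\ (forall (a : F) (x y z : L), br (a *: x + y) z = a *: br x z + br y z),
      (forall (a : F) (x y z : L), br x (a *: y + z) = a *: br x y + br x z),
      (forall x : L, br x x = 0)
    & (forall x y z : L, br x (br y z) + br y (br z x) + br z (br x y) = 0)].

Definition is_linear (F : fieldType) (V W : lmodType F) (f : V -> W) : Prop :=
  forall (a : F) (x y : V), f (a *: x + y) = a *: f x + f y.

Definition idempotent (F : fieldType) (A : algType F) (q : A) : Prop := q * q = q.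

(* membership in the invariant algebra (A,q) = {x | q x q = q x} *)
Definition inv_mem (F : fieldType) (A : algType F) (q x : A) : Prop := q * x * q = q * x.

Definition bracket6 (F : fieldType) (A : algType F) (k : F) (q x y : A) : A :=
  x * y - y * x - x * y * q + y * x * q + k *: (x * q * y) - k *: (y * q * x).

Definition lie_hom6 (F : fieldType) (L : lmodType F) (br : L -> L -> L)
    (k : F) (A : algType F) (q : A) (f : L -> A) : Prop :=
  [/\ is_linear f, (forall x, inv_mem q (f x))
    & (forall x y, f (br x y) = bracket6 k q (f x) (f y))].

Definition inv_hom (F : fieldType) (U B : algType F) (qU : U) (qB : B) (g : U -> B) : Prop :=
  [/\ is_linear g, (forall x y, g (x * y) = g x * g y), g 1 = 1 & g qU = qB].

(* ((U,q),i) is the enveloping^{6-th} algebra of (L,br) (for the parameter k),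
   with (U,q) = U, i.e. every element of U lies in the invariant algebra. *)
Definition enveloping6 (F : fieldType) (L : lmodType F) (br : L -> L -> L)
    (k : F) (U : algType F) (q : U) (i : L -> U) : Prop :=
  [/\ idempotent q, (forall x : U, inv_mem q x), lie_hom6 br k q i
    & forall (B : algType F) (qB : B), idempotent qB ->
        forall f : L -> B, lie_hom6 br k qB f ->
          exists! g : U -> B, inv_hom q qB g /\ (forall x, f x = g (i x))].

(* invariant anti-homomorphism of (U,q): an invariant homomorphism
   (U,q) -> (opposite U, 1-q) *)
Definition inv_antihom (F : fieldType) (U : algType F) (q : U) (S : U -> U) : Prop :=
  [/\ is_linear S, (forall x y, S (x * y) = S y * S x), S 1 = 1 & S q = 1 - q].

(* Main.v *)
Require Import Defs.
From HB Require Import structures.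
From mathcomp Require Import all_boot all_order all_algebra.
Import GRing.Theory.
Local Open Scope ring_scope.

Section Opp.
Variables (F : fieldType) (U : algType F).
Definition oppA : Type := U^c.
HB.instance Definition _ := GRing.NzRing.on oppA.
HB.instance Definition _ := GRing.Zmodule_isLmodule.Build F oppA
  (fun a b v => @scalerA F U a b v) (@scale1r F U) (@scalerDr F U) (fun v => @scalerDl F U v).
Lemma oppA_scalerAl (a : F) (u v : oppA) : a *: (u * v) = (a *: u) * v.
Proof. exact: (@scalerAr F U a v u). Qed.
HB.instance Definition _ := GRing.Lmodule_isLalgebra.Build F oppA oppA_scalerAl.
Lemma oppA_scalerAr (a : F) (u v : oppA) : a *: (u * v) = u * (a *: v).
Proof. exact: (@scalerAl F U a v u). Qed.
HB.instance Definition _ := GRing.Lalgebra_isAlgebra.Build F oppA oppA_scalerAr.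
End Opp.
Arguments oppA {F} U.

Lemma ac6 (V : zmodType) (u v w t X Y : V) : u - v - w + t + X - Y = u - v - (w - t) + (X - Y).
Proof. by rewrite opprB -!addrA (addrCA (-w)). Qed.

Lemma ac5 (V : zmodType) (u v w t : V) : u - v - (u - w) + (v - t) = w - t.
Proof. by rewrite opprB [u - v + _]addrC [w - u + _]addrA subrK addrA subrK. Qed.

Lemma ac4 (V : zmodType) (x y z w : V) : -x + y + (-z + w) = w - z + y - x.
Proof. by rewrite [LHS]addrC [LHS]addrA [-z + w]addrC [LHS]addrAC. Qed.

Section Key.
Variables (F : fieldType) (U : algType F) (k : F) (p q : U).
Hypotheses (hk : k != 0) (qq : q * q = q) (pp : p * p = p) (qp : q * p = 0) (pq : p * q = 0)
  (qzp : forall z, q * z * p = 0) (pzp : forall z, p * z * p = z * p).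

Lemma r1 X : X * q * p = 0. Proof. by rewrite -mulrA qp mulr0. Qed.
Lemma r2 X : X * p * q = 0. Proof. by rewrite -mulrA pq mulr0. Qed.
Lemma r3 X Y : X * q * Y * p = 0. Proof. by transitivity (X * (q * Y * p)); [rewrite !mulrA | rewrite qzp mulr0]. Qed.
Lemma r4 X Y Z : X * q * Y * Z * p = 0. Proof. by transitivity (X * (q * (Y * Z) * p)); [rewrite !mulrA | rewrite qzp mulr0]. Qed.
Lemma r5 Y Z : q * Y * Z * p = 0. Proof. by transitivity (q * (Y * Z) * p); [rewrite !mulrA | rewrite qzp]. Qed.
Lemma r6 X Y : X * p * Y * p = X * Y * p. Proof. by transitivity (X * (p * Y * p)); [rewrite !mulrA | rewrite pzp mulrA]. Qed.
Lemma r7 X : X * q * q = X * q. Proof. by rewrite -mulrA qq. Qed.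
Lemma r8 X : X * p * p = X * p. Proof. by rewrite -mulrA pp. Qed.

Definition fp (z : U) := - (k^-1 *: (z * p)) - k *: (q * z).

Lemma fp_lin (c : F) (a b : U) : fp (c *: a + b) = c *: fp a + fp b.
Proof.
rewrite /fp mulrDl mulrDr -!scalerAl -!scalerAr !scalerDr !scalerA (mulrC k^-1) (mulrC k).
rewrite !scalerN !scalerA.
by rewrite !opprD addrACA.
Qed.

Lemma key (a b : U) :
  fp ((a * b - b * a) * p + k *: (a * q * b - b * q * a)) =
  q * (fp b * fp a) - q * (fp a * fp b) + k *: (fp b * p * fp a) - k *: (fp a * p * fp b).
Proof.
rewrite /fp.
do 4 rewrite ?mulrDl ?mulrDr ?mulrN ?mulNr ?opprK ?opprD ?scalerDr ?scalerN ?scalerBr -?scalerAl -?scalerAr ?scalerA ?mulrA.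
do 3 rewrite ?qzp ?r1 ?r2 ?r3 ?r4 ?r5 ?r6 ?r7 ?r8 ?qq ?pp ?qp ?pq ?mul0r ?mulr0 ?scaler0 ?oppr0 ?addr0 ?add0r.
by rewrite mulfV // mul1r ac4.
Qed.
End Key.
Arguments fp {F U} k p q z.

Theorem proposition7p1 (F : fieldType) (L : lmodType F) (br : L -> L -> L)
    (hL : lie_bracket br) (k : F) (hk : k != 0)
    (U : algType F) (q : U) (i : L -> U) (hU : enveloping6 br k q i) :
  exists! S : U -> U,
    [/\ inv_antihom q S, S q = 1 - q
      & forall x : L,
          S (i x) = - (k^-1 *: i x) - k *: (q * i x) + k^-1 *: (i x * q)].
Proof.
case: hU => hqq hinv [hilin himem hibr] univ.
rewrite /Defs.idempotent in hqq.
pose p := 1 - q.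
have qzp : forall z, q * z * p = 0.
  by move=> z; rewrite /p mulrBr mulr1 hinv subrr.
have pzp : forall z, p * z * p = z * p.
  by move=> z; rewrite [in LHS]/p mulrBl mul1r mulrBl qzp subr0.
have qp : q * p = 0 by have := qzp 1; rewrite mulr1.
have pq : p * q = 0 by rewrite /p mulrBl mul1r hqq subrr.
have pp : p * p = p by rewrite [in LHS]/p mulrBl mul1r qp subr0.
have fE : forall a : U, - (k^-1 *: a) - k *: (q * a) + k^-1 *: (a * q) = fp k p q a.
  move=> a; rewrite /fp /p mulrBr mulr1 scalerBr opprB.
  by rewrite addrC addrA.
pose f : L -> oppA U := fun x => - (k^-1 *: i x) - k *: (q * i x) + k^-1 *: (i x * q).
have hidem : Defs.idempotent (1 - q : oppA U) by exact: pp.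
have hf : lie_hom6 br k (1 - q : oppA U) f.
  split.
  - move=> c x y; rewrite /f !fE hilin.
    by rewrite fp_lin.
  - move=> x; rewrite /inv_mem /f fE.
    change (p * (fp k p q (i x) * p) = fp k p q (i x) * p).
    by rewrite mulrA pzp.
  - move=> x y; rewrite /f !fE hibr.
    have -> : bracket6 k q (i x) (i y) = (i x * i y - i y * i x) * p + k *: (i x * q * i y - i y * q * i x).
      by rewrite /bracket6 /p mulrBr mulr1 mulrBl scalerBr ac6.
    rewrite (@key _ _ k p q hk hqq pp pq qzp pzp).
    set fa := fp k p q (i x); set fb := fp k p q (i y).
    change (q * (fb * fa) - q * (fa * fb) + k *: (fb * p * fa) - k *: (fa * p * fb) =
      fb * fa - fa * fb - p * (fb * fa) + p * (fa * fb) + k *: (fb * (p * fa)) - k *: (fa * (p * fb))).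
    have hp : forall u, p * u = u - q * u by move=> u; rewrite /p mulrBl mul1r.
    by rewrite (hp (fb * fa)) (hp (fa * fb)) ac5 !mulrA.
have [g [[[glin gmul g1 gq] gi] gu]] := univ (oppA U) (1 - q) hidem f hf.
exists g; split.
  split.
  - split.
    + exact: glin.
    + by move=> x y; rewrite gmul.
    + exact: g1.
    + exact: gq.
  - exact: gq.
  - by move=> x; rewrite -gi.
move=> S [[Slin Smul S1 Sq] _ Si].
apply: gu; split.
  split.
  - exact: Slin.
  - by move=> x y; rewrite Smul.
  - exact: S1.
  - exact: Sq.
by move=> x; rewrite Si.
Qed.
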